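(* For every formula $A$, the context $\psi(A)$ is irreducible and is a maximal decomposition of $A$: the sequent $\psi(A)\vdash A$ is derivable, and for every irreducible context $\Theta$ such that $\Theta\vdash A$ is derivable, $\Theta\le\psi(A)$ in the substitution order.
   Context: Formulas are built from atoms ($p,q,\dots$) by a binary product: every formula is an atom or $A\bullet B$. A context is a finite (possibly empty) list of formulas; commas denote concatenation; a context is irreducible if its leftmost formula is not a product. $\psi$ is defined inductively by $\psi(p)=p$ for atoms and $\psi(A\bullet B)=\psi(A),B$. The sequent calculus has exactly four rules (no weakening, contraction or exchange): ($\bullet L$) from $A,B,\Delta\vdash C$ infer $A\bullet B,\Delta\vdash C$ (the product must be leftmost); ($\bullet R$) from $\Gamma\vdash A$ and $\Delta\vdash B$ infer $\Gamma,\Delta\vdash A\bullet B$; ($id$) $A\vdash A$; ($cut$) from $\Theta\vdash A$ and $\Gamma,A,\Delta\vdash B$ infer $\Gamma,\Theta,\Delta\vdash B$; derivable means conclusion of a finite derivation tree with no undischarged premises. The substitution order on contexts is the least relation $\le$ such that: (1) if $\Gamma\vdash A$ is derivable then $\Gamma\le A$ (one-element context); (2) $\cdot\le\cdot$ for the empty context; (3) if $\Gamma_1\le\Gamma_2$ and $\Theta_1\le\Theta_2$ then $(\Gamma_1,\Theta_1)\le(\Gamma_2,\Theta_2)$. *)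

(* Defs.v *)
From Stdlib Require Import List.
Import ListNotations.

Inductive formula : Type :=
| atom : nat -> formula
| prod : formula -> formula -> formula.

(* Contexts: finite lists of formulas; comma = concatenation (++). *)
Definition context := list formula.

Definition irreducible (G : context) : Prop :=
  match G with
  | [] => True
  | A :: _ => forall B C, A <> prod B C
  end.

Fixpoint psi (A : formula) : context :=
  match A with
  | atom p => [atom p]
  | prod B C => psi B ++ [C]
  end.

Inductive derivable : context -> formula -> Prop :=
| d_prodL : forall A B D C,
    derivable (A :: B :: D) C -> derivable (prod A B :: D) C
| d_prodR : forall G D A B,
    derivable G A -> derivable D B -> derivable (G ++ D) (prod A B)
| d_id : forall A, derivable [A] A
| d_cut : forall T A G D B,
    derivable T A -> derivable (G ++ A :: D) B -> derivable (G ++ T ++ D) B.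

Inductive sub_le : context -> context -> Prop :=
| sl_seq : forall G A, derivable G A -> sub_le G [A]
| sl_nil : sub_le [] []
| sl_app : forall G1 G2 T1 T2,
    sub_le G1 G2 -> sub_le T1 T2 -> sub_le (G1 ++ T1) (G2 ++ T2).

(* Main.v *)
Require Import Defs.
From Stdlib Require Import List.
Import ListNotations.

Inductive cf : context -> formula -> Prop :=
| cf_prodL : forall A B D C, cf (A :: B :: D) C -> cf (prod A B :: D) C
| cf_prodR : forall G D A B, cf G A -> cf D B -> cf (G ++ D) (prod A B)
| cf_id : forall A, cf [A] A.

Lemma cf_derivable : forall G A, cf G A -> derivable G A.
Proof. induction 1; econstructor; eauto. Qed.

Lemma principal X Y :
  (forall Γ B, cf Γ B -> forall G D, Γ = G ++ X :: D -> forall T, cf T X -> cf (G++T++D) B) ->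
  (forall Γ B, cf Γ B -> forall G D, Γ = G ++ Y :: D -> forall T, cf T Y -> cf (G++T++D) B) ->
  forall T F, cf T F -> F = prod X Y -> forall D B, cf (X :: Y :: D) B -> cf (T ++ D) B.
Proof.
  intros IHX IHY T F H. induction H; intros E D0 B0 HB.
  - simpl. constructor. apply (IHcf E D0 B0 HB).
  - injection E; intros; subst.
    pose proof (IHY _ _ HB [X] D0 eq_refl _ H0) as H1. simpl in H1.
    pose proof (IHX _ _ H1 [] (D ++ D0) eq_refl _ H) as H2. simpl in H2.
    rewrite <- app_assoc. exact H2.
  - subst. simpl. constructor. exact HB.
Qed.

Lemma cut_adm (A : formula) : forall Γ B, cf Γ B -> forall G D, Γ = G ++ A :: D ->
  forall T, cf T A -> cf (G++T++D) B.
Proof.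
  induction A as [p | X IHX Y IHY]; intros Γ B H; induction H; intros G0 D0 E T HT.
  - destruct G0 as [|Z G']; simpl in E; [discriminate|]; injection E; intros; subst.
    + simpl. constructor. apply (IHcf (A :: B :: G') D0 eq_refl T HT).
  - destruct (app_eq_app _ _ _ _ (eq_sym E)) as [l [[E1 E2]|[E1 E2]]].
    + subst. rewrite <- !app_assoc. apply cf_prodR; [assumption|]; apply (IHcf2 l D0 eq_refl T HT).
    + destruct l as [|Z l'].
      * simpl in *. subst. rewrite app_nil_r in *. apply cf_prodR; [assumption|].
        apply (IHcf2 [] D0 eq_refl T HT).
      * simpl in E2. injection E2; intros; subst.
        replace (G0 ++ T ++ l' ++ D) with ((G0 ++ T ++ l') ++ D) by (rewrite <- !app_assoc; reflexivity).
        apply cf_prodR; [|assumption]; apply (IHcf1 G0 l'). reflexivity. exact HT.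
  - destruct G0 as [|Z G']; simpl in E; injection E; intros; subst.
    + simpl. rewrite app_nil_r. exact HT.
    + destruct G'; discriminate.
  - destruct G0 as [|Z G']; simpl in E; injection E; intros; subst.
    + simpl. eapply principal; [exact IHX|exact IHY|exact HT|reflexivity|exact H].
    + simpl. constructor. apply (IHcf (A :: B :: G') D0 eq_refl T HT).
  - destruct (app_eq_app _ _ _ _ (eq_sym E)) as [l [[E1 E2]|[E1 E2]]].
    + subst. rewrite <- !app_assoc. apply cf_prodR; [assumption|]; apply (IHcf2 l D0 eq_refl T HT).
    + destruct l as [|Z l'].
      * simpl in *. subst. rewrite app_nil_r in *. apply cf_prodR; [assumption|].
        apply (IHcf2 [] D0 eq_refl T HT).
      * simpl in E2. injection E2; intros; subst.
        replace (G0 ++ T ++ l' ++ D) with ((G0 ++ T ++ l') ++ D) by (rewrite <- !app_assoc; reflexivity).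
        apply cf_prodR; [|assumption]; apply (IHcf1 G0 l'). reflexivity. exact HT.
  - destruct G0 as [|Z G']; simpl in E; injection E; intros; subst.
    + simpl. rewrite app_nil_r. exact HT.
    + destruct G'; discriminate.
Qed.

Lemma derivable_cf : forall G A, derivable G A -> cf G A.
Proof.
  induction 1.
  - constructor; auto.
  - constructor; auto.
  - constructor.
  - eapply cut_adm; eauto.
Qed.

Lemma cf_nonempty : forall G A, cf G A -> G <> [].
Proof.
  induction 1; try discriminate. destruct G; [contradiction|discriminate].
Qed.

Theorem proposition2p5 (A : formula) :
  irreducible (psi A) /\
  derivable (psi A) A /\
  (forall Theta : context,
      irreducible Theta -> derivable Theta A -> sub_le Theta (psi A)).
Proof.
  induction A as [p | B [IB1 [IB2 IB3]] C [IC1 [IC2 IC3]]].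
  - simpl. split; [intros B C; discriminate|]. split; [constructor|].
    intros. constructor. auto.
  - simpl. split; [|split].
    + destruct (psi B) eqn:E; simpl; auto.
      pose proof (cf_nonempty _ _ (derivable_cf _ _ IB2)). contradiction.
    + constructor; auto. constructor.
    + intros Theta Hi Hd. apply derivable_cf in Hd.
      inversion Hd; subst.
      * simpl in Hi. exfalso. eapply Hi. reflexivity.
      * apply sl_app.
        -- apply IB3.
           ++ destruct G as [|x G']; [exfalso; exact (cf_nonempty _ _ H2 eq_refl)|exact Hi].
           ++ apply cf_derivable; auto.
        -- constructor. apply cf_derivable; auto.
      * simpl in Hi. exfalso. eapply Hi. reflexivity.
Qed.
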